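(* Let $X$ be a complex Banach space, $\mathcal{F}$ an algebra with unit, $\Phi:\mathcal{F}\to\mathcal{C}(X)$ a calculus, and $\mathcal{E}\subseteq\mathrm{bdd}(\mathcal{F},\Phi)$ such that $\mathrm{bdd}(\mathcal{F},\Phi)$ is anchored in $\mathcal{E}$. Then $\mathcal{E}$ determines $\Phi$ on $\mathcal{F}$. If, in addition, $\mathcal{E}$ is multiplicative (closed under products), then $\mathcal{E}$ is an algebraic core for $\Phi$.
   Context: $\mathcal{F}$ need not be commutative. $\mathcal{L}(X)$, $\mathcal{C}(X)$: bounded, resp. closed linear operators on $X$; operator inclusions are graph inclusions, sums/products have natural domains, ''$Tx=y$'' means $x\in\mathrm{dom}(T)$, $Tx=y$. A proto-calculus is a map $\Phi:\mathcal{F}\to\mathcal{C}(X)$ with (FC1) $\Phi(\mathbf{1})=I$; (FC2) $\lambda\Phi(f)\subseteq\Phi(\lambda f)$, $\Phi(f)+\Phi(g)\subseteq\Phi(f+g)$; (FC3) $\Phi(f)\Phi(g)\subseteq\Phi(fg)$ with $\mathrm{dom}(\Phi(f)\Phi(g))=\mathrm{dom}(\Phi(g))\cap\mathrm{dom}(\Phi(fg))$. $\mathrm{bdd}(\mathcal{F},\Phi)=\{f:\Phi(f)\in\mathcal{L}(X)\}$. For a subset $\mathcal{E}\subseteq\mathcal{F}$ and $f\in\mathcal{F}$, $[f]_{\mathcal{E}}=\{e\in\mathcal{E}: ef\in\mathcal{E}\}$; $\mathrm{reg}(f,\Phi)=[f]_{\mathrm{bdd}(\mathcal{F},\Phi)}$.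 A subset $\mathcal{M}\subseteq\mathrm{bdd}(\mathcal{F},\Phi)$ determines $\Phi$ at $f$ if for all $x,y$: $\Phi(f)x=y\iff\Phi(ef)x=\Phi(e)y$ for all $e\in\mathcal{M}\cap\mathrm{reg}(f,\Phi)$; it determines $\Phi$ on $\mathcal{F}$ if it does so at every $f$. $\mathcal{E}\subseteq\mathrm{bdd}(\mathcal{F},\Phi)$ is an algebraic core for $\Phi$ if for every $f\in\mathcal{F}$: $\Phi(f)x=y\iff\Phi(ef)x=\Phi(e)y$ for all $e\in[f]_{\mathcal{E}}$. A calculus is a proto-calculus such that $\mathrm{bdd}(\mathcal{F},\Phi)$ determines $\Phi$ on $\mathcal{F}$. A nonempty $\mathcal{M}\subseteq\mathrm{bdd}(\mathcal{F},\Phi)$ is an anchor set if $\bigcap_{e\in\mathcal{M}}\ker\Phi(e)=\{0\}$; $g$ is anchored in $\mathcal{E}$ if $[g]_{\mathcal{E}}$ is an anchor set, and a set is anchored in $\mathcal{E}$ if each of its elements is. *)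

(* Defs.v *)
From HB Require Import structures.
From mathcomp Require Import all_boot all_order all_algebra.
From mathcomp Require Import all_classical all_reals.
From mathcomp Require Import topology normedtype.
From mathcomp Require Import complex.
Set Implicit Arguments. Unset Strict Implicit. Unset Printing Implicit Defensive.
Import Order.TTheory GRing.Theory Num.Theory.
Import numFieldNormedType.Exports.
Local Open Scope classical_set_scope.
Local Open Scope ring_scope.
Local Open Scope complex_scope.

Section Ops.
Variables (R : realType) (X : normedModType R[i]).

(* A (possibly unbounded, partially defined) operator on X, given by its graph:
   [T x y] means "x \in dom T and T x = y". *)
Definition op := X -> X -> Prop.

Definition op_dom (T : op) : set X := [set x | exists y, T x y].

Definition op_incl (S T : op) : Prop := forall x y, S x y -> T x y.
Definition op_eq (S T : op) : Prop := forall x y, S x y <-> T x y.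

Definition op_id : op := fun x y => y = x.
Definition op_scale (l : R[i]) (T : op) : op := fun x y => exists z, T x z /\ y = l *: z.
Definition op_add (S T : op) : op := fun x y => exists z w, S x z /\ T x w /\ y = z + w.
Definition op_comp (S T : op) : op := fun x y => exists z, T x z /\ S z y.

Definition linear_op (T : op) : Prop :=
  [/\ (forall x y y', T x y -> T x y' -> y = y'),
      T 0 0,
      (forall x y x' y', T x y -> T x' y' -> T (x + x') (y + y')) &
      (forall (l : R[i]) x y, T x y -> T (l *: x) (l *: y))].

Definition closed_op (T : op) : Prop :=
  linear_op T /\ closed [set p : X * X | T p.1 p.2].

Definition bounded_op (T : op) : Prop :=
  [/\ linear_op T, (forall x, exists y, T x y) &
      exists M : R[i], 0 <= M /\ forall x y, T x y -> `|y| <= M * `|x|].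

Definition kernel (T : op) : set X := [set x | T x 0].
End Ops.

Section Calculus.
Variables (R : realType) (X : normedModType R[i]) (F : algType R[i]).
Variable Phi : F -> op X.

Definition proto_calculus : Prop :=
  [/\ forall f, closed_op (Phi f),
      op_eq (Phi 1) (@op_id R X),
      (forall (l : R[i]) f, op_incl (op_scale l (Phi f)) (Phi (l *: f))) /\
      (forall f g, op_incl (op_add (Phi f) (Phi g)) (Phi (f + g))) &
      forall f g, op_incl (op_comp (Phi f) (Phi g)) (Phi (f * g)) /\
        (forall x, op_dom (op_comp (Phi f) (Phi g)) x <->
                   op_dom (Phi g) x /\ op_dom (Phi (f * g)) x)].

Definition bdd : set F := [set f | bounded_op (Phi f)].

Definition bracket (E : set F) (f : F) : set F := [set e | E e /\ E (e * f)].

Definition reg (f : F) : set F := bracket bdd f.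

Definition det_eq (e f : F) (x y : X) : Prop :=
  exists z, Phi e y z /\ Phi (e * f) x z.

Definition determines_at (M : set F) (f : F) : Prop :=
  M `<=` bdd /\
  forall x y, Phi f x y <-> (forall e, M e -> reg f e -> det_eq e f x y).

Definition determines (M : set F) : Prop := forall f, determines_at M f.

Definition algebraic_core (E : set F) : Prop :=
  E `<=` bdd /\
  forall f x y, Phi f x y <-> (forall e, bracket E f e -> det_eq e f x y).

Definition calculus : Prop := proto_calculus /\ determines bdd.

Definition anchor_set (M : set F) : Prop :=
  [/\ M !=set0, M `<=` bdd &
      forall x, (forall e, M e -> kernel (Phi e) x) -> x = 0].

Definition anchored_in (E : set F) (g : F) : Prop := anchor_set (bracket E g).
Definition set_anchored_in (S E : set F) : Prop := forall g, S g -> anchored_in E g.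

Definition multiplicative (E : set F) : Prop :=
  forall e1 e2, E e1 -> E e2 -> E (e1 * e2).
End Calculus.

(* Main.v *)
Require Import Defs.
From mathcomp Require Import all_boot all_order all_algebra.
From mathcomp Require Import all_classical all_reals.
From mathcomp Require Import topology normedtype.
From mathcomp Require Import complex.
Local Open Scope classical_set_scope.
Local Open Scope ring_scope.
Set Implicit Arguments.

Section Aux.
Import Order.TTheory GRing.Theory Num.Theory.
Variables (R : realType) (X : completeNormedModType R[i]) (F : algType R[i]).
Variable Phi : F -> op X.
Hypothesis HP : proto_calculus Phi.

Lemma sv f x y y' : Phi f x y -> Phi f x y' -> y = y'.
Proof. case: HP => Hc _ _ _; case: (Hc f) => [[H _ _ _] _]; exact: H. Qed.

Lemma lin_sub f x y x' y' : Phi f x y -> Phi f x' y' -> Phi f (x - x') (y - y').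
Proof.
case: HP => Hc _ _ _; case: (Hc f) => [[_ _ Ha Hs] _] H1 H2.
have := Ha _ _ _ _ H1 (Hs (-1) _ _ H2).
by rewrite !scaleN1r.
Qed.

Lemma comp_ok f g x z w : Phi g x z -> Phi f z w -> Phi (f * g) x w.
Proof. case: HP => _ _ _ Hm H1 H2; apply: (Hm f g).1; by exists z. Qed.

Lemma bdd_mul a b : bdd Phi a -> bdd Phi b -> bdd Phi (a * b).
Proof.
move=> [la ta [Ma [Ma0 HMa]]] [lb tb [Mb [Mb0 HMb]]].
case: HP => Hc _ _ _; split; first by case: (Hc (a * b)).
  move=> x; have [z Hz] := tb x; have [w Hw] := ta z.
  by exists w; apply: (comp_ok Hz Hw).
exists (Ma * Mb); split; first exact: mulr_ge0.
move=> x y Hxy; have [z Hz] := tb x; have [w Hw] := ta z.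
have -> := sv Hxy (comp_ok Hz Hw).
apply: (le_trans (HMa _ _ Hw)); rewrite -mulrA; apply: ler_wpM2l => //.
exact: HMb.
Qed.

Lemma anchor_lemma (A : set F) g f x y :
  bdd Phi g -> bdd Phi (g * f) -> A `<=` bdd Phi ->
  (forall x, (forall e, A e -> kernel (Phi e) x) -> x = 0) ->
  (forall k, A k -> det_eq Phi (k * g) f x y) -> det_eq Phi g f x y.
Proof.
move=> [_ tg _] [_ tgf _] sA Hker Hk.
have [z0 Hz0] := tg y; have [u Hu] := tgf x.
exists z0; split => //.
suff : u - z0 = 0 by move/eqP; rewrite subr_eq0 => /eqP <-.
apply: Hker => k Ak; have [_ tk _] := sA _ Ak.
have [a Ha] := tk u; have [b Hb] := tk z0.
have [c [Hc1 Hc2]] := Hk _ Ak.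
have Hka := comp_ok Hu Ha; have Hkb := comp_ok Hz0 Hb.
rewrite -mulrA in Hc2.
have Eb := sv Hkb Hc1; have Ea := sv Hka Hc2.
have := lin_sub Ha Hb; by rewrite Ea Eb subrr.
Qed.
End Aux.
Unset Implicit Arguments.

Theorem theorem4p2 (R : realType) (X : completeNormedModType R[i])
    (F : algType R[i]) (Phi : F -> op X) (E : set F) :
  calculus Phi ->
  E `<=` bdd Phi ->
  set_anchored_in Phi (bdd Phi) E ->
  determines Phi E /\ (multiplicative E -> algebraic_core Phi E).
Proof.
move=> [HP Hdet] sE Hanc.
have fwd : forall f x y, Phi f x y -> forall e, reg Phi f e -> det_eq Phi e f x y.
  move=> f x y Hxy e He; exact: ((Hdet f).2 x y).1 Hxy e He.1 He.
have D : determines Phi E.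
  move=> f; split => // x y; split.
    by move=> Hxy e _; apply: fwd.
  move=> H; apply: ((Hdet f).2 x y).2 => g Bg [_ Bgf].
  have [_ sA Hk] := Hanc g Bg.
  apply: (anchor_lemma HP Bg Bgf sA Hk) => k [Ek Ekg].
  apply: H => //; split; first exact: sE.
  rewrite -GRing.mulrA; apply: bdd_mul => //; exact: sE.
split => // Hm; split => // f x y; split.
  move=> Hxy e [Ee Eef]; apply: fwd => //; split; exact: sE.
move=> H; apply: ((D f).2 x y).2 => h Eh [Bh Bhf].
have [_ sA Hk] := Hanc _ Bhf.
apply: (anchor_lemma HP Bh Bhf sA Hk) => k [Ek Ekhf].
apply: H; split; first exact: Hm.
by rewrite -GRing.mulrA.
Qed.
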